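(* Let $\mathcal N$ be a class of phylogenetic networks on a set $S$ of taxa such that for all $N_1,N_2\in\mathcal N$, $d_\mu(N_1,N_2)=0$ implies $N_1\cong N_2$. Then for all $N_1,N_2\in\mathcal N$, $m(N_1,N_2)=0$ implies $N_1\cong N_2$.
   Context: A phylogenetic network on $S=\{1,\dots,n\}$ is a finite rooted directed acyclic graph whose leaves are bijectively labeled by $S$; $\cong$ is digraph isomorphism preserving leaf labels. For a node $v$, $\mu(v)=(m_1(v),\dots,m_n(v))$ where $m_i(v)$ is the number of directed paths from $v$ to leaf $i$; $\mu(N)$ is the multiset of $\mu(v)$ over all nodes, and $d_\mu(N_1,N_2)=\frac12|\mu(N_1)\bigtriangleup\mu(N_2)|$. The nested label $\ell(v)$ is defined by induction on height: $\ell(v)=\{i\}$ for the leaf labeled $i$, otherwise the multiset of nested labels of the children of $v$; $\Upsilon(N)$ is the multiset of nested labels of all nodes, and $m(N_1,N_2)=\frac12|\Upsilon(N_1)\bigtriangleup\Upsilon(N_2)|$. Here $\bigtriangleup$ is multiset symmetric difference (multiplicity $|M_1(x)-M_2(x)|$) and $|\cdot|$ is the sum of multiplicities. *)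

(* Defs.v *)
From mathcomp Require Import all_boot all_algebra.
Set Implicit Arguments. Unset Strict Implicit. Unset Printing Implicit Defensive.

Definition is_leaf (V : finType) (E : rel V) (v : V) : bool := [forall w, ~~ E v w].

Definition acyclic (V : finType) (E : rel V) : Prop :=
  forall x y, E x y -> ~~ connect E y x.

Definition rooted (V : finType) (E : rel V) : Prop :=
  exists r, forall v, connect E r v.

Record network (n : nat) := Network {
  nV : finType;
  nE : rel nV;
  nlab : 'I_n -> nV;
  n_acyclic : acyclic nE;
  n_rooted : rooted nE;
  n_lab_inj : injective nlab;
  n_lab_leaves : forall v, is_leaf nE v = (v \in codom nlab)
}.
Arguments nV {n}.
Arguments nE {n}.
Arguments nlab {n}.

Definition iso n (N1 N2 : network n) : Prop :=
  exists f : nV N1 -> nV N2,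
    [/\ bijective f,
        forall x y, nE N2 (f x) (f y) = nE N1 x y
      & forall i, f (nlab N1 i) = nlab N2 i].

Definition msymdiff (T : eqType) (s1 s2 : seq T) : nat :=
  \sum_(x <- undup (s1 ++ s2))
     ((count_mem x s1 - count_mem x s2) + (count_mem x s2 - count_mem x s1)).

Definition half_symdiff (T : eqType) (s1 s2 : seq T) : rat :=
  ((msymdiff s1 s2)%:R / 2)%R.

(* number of directed paths from v to w: a path v = x0 -> x1 -> ... -> xk = w
   is encoded by the tuple (x1,...,xk); in an acyclic graph k < #|V|. *)
Definition npaths (V : finType) (E : rel V) (v w : V) : nat :=
  \sum_(k < #|V|) #|[set p : k.-tuple V | path E v p && (last v p == w)]|.

Definition mu_vec n (N : network n) (v : nV N) : {ffun 'I_n -> nat} :=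
  [ffun i => npaths (nE N) v (nlab N i)].

Definition mu_rep n (N : network n) : seq {ffun 'I_n -> nat} :=
  [seq mu_vec v | v <- enum (nV N)].

Definition d_mu n (N1 N2 : network n) : rat := half_symdiff (mu_rep N1) (mu_rep N2).

(* Nested labels are finite nested multisets.  They are encoded in
   GenTree.tree nat: the leaf label {i} is [GenTree.Leaf i], and a multiset
   of nested labels is [GenTree.Node 0 s] with s listed in the canonical
   order given by the injective code [pickle], so that two encodings are
   equal iff the multisets are equal. *)
Definition nlabel := GenTree.tree nat.

Definition nl_le (a b : nlabel) : bool := (pickle a <= pickle b)%N.

Definition nl_multiset (s : seq nlabel) : nlabel := GenTree.Node 0 (sort nl_le s).

Definition leaf_index n (N : network n) (v : nV N) : nat :=
  if [pick i | nlab N i == v] is Some i then nat_of_ord i else 0.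

Fixpoint nested_label_fuel n (N : network n) (k : nat) (v : nV N) : nlabel :=
  match k with
  | 0 => GenTree.Node 0 [::]
  | k'.+1 =>
      if is_leaf (nE N) v then GenTree.Leaf (leaf_index v)
      else nl_multiset [seq nested_label_fuel k' w | w <- enum (nE N v)]
  end.

(* the height of any node is < #|V|, so this fuel suffices *)
Definition nested_label n (N : network n) (v : nV N) : nlabel :=
  @nested_label_fuel n N #|nV N| v.

Definition Upsilon n (N : network n) : seq nlabel :=
  [seq nested_label v | v <- enum (nV N)].

Definition m_dist n (N1 N2 : network n) : rat := half_symdiff (Upsilon N1) (Upsilon N2).

(* Main.v *)
Require Import Defs.
From mathcomp Require Import all_boot all_algebra.
Set Implicit Arguments. Unset Strict Implicit.

Section P.
Variables (V : finType) (E : rel V).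
Definition P k (v w : V) := #|[set p : k.-tuple V | path E v p && (last v p == w)]|.

Lemma P0 v w : P 0 v w = (v == w).
Proof.
rewrite /P -sum1dep_card.
case: (eqVneq v w) => [<-|ne].
  rewrite (bigD1 [tuple]) /= ?eqxx // big1 // => p /andP[_ hp]; by case/negP: hp; rewrite (tuple0 p).
by rewrite big_pred0 // => p; rewrite tuple0 /= (negbTE ne).
Qed.

Lemma PS k v w : P k.+1 v w = \sum_(c <- enum (E v)) P k c w.
Proof.
rewrite /P -sum1dep_card big_enum /=.
pose f := fun x : V * k.-tuple V => [tuple of x.1 :: x.2].
have fb : bijective f.
  exists (fun p : k.+1.-tuple V => (thead p, [tuple of behead p])).
    by case=> c q; rewrite /f /= theadE; congr pair; apply: val_inj.
  by move=> p; rewrite /f /=; apply: val_inj; rewrite /= [in RHS](tuple_eta p).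
rewrite (reindex f) /=; last by apply: onW_bij.
transitivity (\sum_(c | E v c) \sum_(q : k.-tuple V | path E c q && (last c q == w)) 1).
  rewrite pair_big_dep /=; apply: eq_bigl => -[c q] /=; by rewrite andbA.
by apply: eq_bigr => c _; rewrite sum1dep_card.
Qed.

Hypothesis acyc : forall x y, E x y -> ~~ connect E y x.

Lemma path_uniq p v : path E v p -> uniq (v :: p).
Proof.
elim: p v => [//|y p IH] v /= /andP[evy hp].
have := IH y hp => /= /andP[-> ->]; rewrite andbT /= andbT.
apply/negP => hin.
have := path_connect hp.
move=> /(_ v hin) cyv.
by move: (acyc evy); rewrite cyv.
Qed.

Lemma P_big v w : P #|V| v w = 0.
Proof.
rewrite /P; apply/eqP; rewrite cards_eq0; apply/eqP/setP => p.
rewrite !inE; apply/negP => /andP[hp _].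
have /card_uniqP := path_uniq hp.
have := max_card (mem (v :: p)).
by move=> h1 h2; move: h1; rewrite h2 /= size_tuple ltnn.
Qed.
End P.

Fixpoint Fc (i : nat) (t : GenTree.tree nat) : nat :=
  match t with
  | GenTree.Leaf j => nat_of_bool (j == i)
  | GenTree.Node _ s => sumn (map (Fc i) s)
  end.

Section Net.
Variables (n : nat) (N : network n).
Let V := nV N.
Let E := nE N.

Lemma leaf_lab i : is_leaf E (nlab N i).
Proof. by rewrite /E n_lab_leaves codom_f. Qed.

Lemma claim k (v : V) : (forall w, P E k v w = 0) ->
  forall i : 'I_n, Fc i (nested_label_fuel k v) = \sum_(j < k) P E j v (nlab N i).
Proof.
elim: k v => [|k IH] v Z i.
  by move: (Z v); rewrite P0 eqxx.
rewrite /=; case: ifP => lv.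
  rewrite big_ord_recl P0 big1 ?addn0.
    rewrite /leaf_index; case: pickP => [j /eqP hj|hn].
      by rewrite -hj (inj_eq (@n_lab_inj _ N)).
    exfalso; move: lv; rewrite n_lab_leaves => /codomP[j hj].
    by move: (hn j); rewrite hj eqxx.
  move=> j _; rewrite PS big_enum /= big_pred0 // => c.
  by move/forallP: lv => /(_ c) /negbTE.
rewrite big_ord_recl P0.
have -> : (v == nlab N i) = false.
  by apply/negP => /eqP hv; move: lv; rewrite hv leaf_lab.
rewrite add0n /nl_multiset /=.
rewrite (perm_sumn (perm_map _ (permEl (perm_sort _ _)))) -map_comp.
rewrite sumnE big_map.
transitivity (\sum_(j < k) \sum_(c <- enum (E v)) P E j c (nlab N i)); last first.
  by apply: eq_bigr => j _; rewrite -PS.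
rewrite [RHS]exchange_big /=.

apply: eq_big_seq => c; rewrite mem_enum => evc /=.
apply: IH => w; apply/eqP; rewrite -leqn0.
move: (Z w); rewrite PS big_enum /= (bigD1 c) //= => /eqP.
by rewrite addn_eq0 => /andP[/eqP -> _].
Qed.
End Net.
Import GRing.Theory Num.Theory.

Lemma msym0_perm (T : eqType) (s1 s2 : seq T) : msymdiff s1 s2 = 0 -> perm_eq s1 s2.
Proof.
rewrite /msymdiff => /eqP; rewrite sum_nat_seq_eq0 => /allP h.
rewrite /perm_eq; apply/allP => x hx /=.
have := h x; rewrite mem_undup => /(_ hx) /implyP /(_ isT).
rewrite addn_eq0 !subn_eq0 => /andP[a b]; by rewrite eqn_leq a b.
Qed.

Lemma perm_msym0 (T : eqType) (s1 s2 : seq T) : perm_eq s1 s2 -> msymdiff s1 s2 = 0.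
Proof.
move/permP => h; rewrite /msymdiff big1 // => x _.
by rewrite h subnn.
Qed.

Lemma half0 (T : eqType) (s1 s2 : seq T) : (half_symdiff s1 s2 == 0)%R = (msymdiff s1 s2 == 0).
Proof.
by rewrite /half_symdiff mulf_eq0 invr_eq0 pnatr_eq0 orbF.
Qed.

Lemma mu_vecE n (N : network n) (v : nV N) :
  mu_vec v = [ffun i : 'I_n => Fc i (nested_label v)].
Proof.
apply/ffunP => i; rewrite !ffunE /nested_label claim //.
by move=> w; apply: P_big; apply: n_acyclic.
Qed.

Lemma mu_repE n (N : network n) :
  mu_rep N = [seq [ffun i : 'I_n => Fc i t] | t <- Upsilon N].
Proof.
rewrite /mu_rep /Upsilon -[RHS]map_comp; apply: eq_map => v; exact: mu_vecE.
Qed.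

Theorem corollary2 (n : nat) (C : network n -> Prop) :
  (forall N1 N2 : network n, C N1 -> C N2 -> d_mu N1 N2 = 0%R -> iso N1 N2) ->
  forall N1 N2 : network n, C N1 -> C N2 -> m_dist N1 N2 = 0%R -> iso N1 N2.
Proof.
move=> H N1 N2 c1 c2 hm; apply: H => //.
apply/eqP; rewrite /d_mu half0; apply/eqP; apply: perm_msym0.
rewrite !mu_repE; apply: perm_map; apply: msym0_perm; apply/eqP.
by rewrite -half0; apply/eqP.
Qed.
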